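(* Let $\mathcal{H}_1=(\mathcal{A}_1,\Delta_{\mathcal{A}_1},S_{\mathcal{A}_1},\varepsilon_{\mathcal{A}_1})$ and $\mathcal{H}_2=(\mathcal{A}_2,\Delta_{\mathcal{A}_2},S_{\mathcal{A}_2},\varepsilon_{\mathcal{A}_2})$ be Hopf algebras over a field $k$, $\mathcal{B}$ a unital $k$-algebra, and $\alpha:\mathcal{A}_1\to\mathcal{B}\otimes\mathcal{A}_2$ a quantum family of homomorphisms from $\mathcal{H}_1$ to $\mathcal{H}_2$. Then $\alpha\circ S_{\mathcal{A}_1}=(\mathrm{id}_{\mathcal{B}}\otimes S_{\mathcal{A}_2})\circ\alpha$.
   Context: Sweedler notation $\Delta(a)=a_{(1)}\otimes a_{(2)}$. For $x\in\mathcal{B}\otimes\mathcal{A}_2$, $x_{12}$ and $x_{13}$ denote $x$ placed in legs (1,2), resp. (1,3), of $\mathcal{B}\otimes\mathcal{A}_2\otimes\mathcal{A}_2$ with $\mathds{1}$ in the remaining leg. Definition: a unital algebra homomorphism $\alpha:\mathcal{A}_1\to\mathcal{B}\otimes\mathcal{A}_2$ is a quantum family of homomorphisms from $\mathcal{H}_1$ to $\mathcal{H}_2$ if $\alpha(a_{(1)})_{12}\alpha(a_{(2)})_{13}=(\mathrm{id}_{\mathcal{B}}\otimes\Delta_{\mathcal{A}_2})(\alpha(a))$ for all $a\in\mathcal{A}_1$. *)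

(* Defs.v *)
(* Tensor products of k-vector spaces / k-algebras are not in
   the library; they are specified here by their universal property. *)
From HB Require Import structures.
From mathcomp Require Import all_boot all_order all_algebra.
Set Implicit Arguments. Unset Strict Implicit. Unset Printing Implicit Defensive.
Import GRing.Theory.
Local Open Scope ring_scope.

Section Hopf.
Variable k : fieldType.

Definition lin (U V : lmodType k) (f : U -> V) : Prop :=
  forall (c : k) x y, f (c *: x + y) = c *: f x + f y.

Definition bilin (U V W : lmodType k) (f : U -> V -> W) : Prop :=
  (forall u, lin (f u)) /\ (forall v, lin (fun u => f u v)).

Definition trilin (U V X W : lmodType k) (f : U -> V -> X -> W) : Prop :=
  [/\ forall u v, lin (f u v), forall u w, lin (fun v => f u v w)
    & forall v w, lin (fun u => f u v w)].

Definition is_tensor (U V W : lmodType k) (t : U -> V -> W) : Prop :=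
  bilin t /\
  forall (X : lmodType k) (f : U -> V -> X), bilin f ->
    exists g : W -> X, [/\ lin g, forall u v, g (t u v) = f u v
      & forall g' : W -> X, lin g' -> (forall u v, g' (t u v) = f u v) ->
          forall w, g' w = g w].

Definition is_tensor3 (U V X W : lmodType k) (t : U -> V -> X -> W) : Prop :=
  trilin t /\
  forall (Y : lmodType k) (f : U -> V -> X -> Y), trilin f ->
    exists g : W -> Y, [/\ lin g, forall u v x, g (t u v x) = f u v x
      & forall g' : W -> Y, lin g' -> (forall u v x, g' (t u v x) = f u v x) ->
          forall w, g' w = g w].

Definition is_tensor_alg (A B T : algType k) (t : A -> B -> T) : Prop :=
  [/\ is_tensor t, t 1 1 = 1
    & forall a b a' b', t a b * t a' b' = t (a * a') (b * b')].

Definition is_tensor3_alg (A B C T : algType k) (t : A -> B -> C -> T) : Prop :=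
  [/\ is_tensor3 t, t 1 1 1 = 1
    & forall a b c a' b' c', t a b c * t a' b' c' = t (a * a') (b * b') (c * c')].

Definition alg_hom (A B : algType k) (f : A -> B) : Prop :=
  lin f /\ monoid_morphism f.

(* Hopf algebra structure on a k-algebra A, relative to a chosen model
   hT of A (x) A and a chosen model hT3 of A (x) A (x) A. *)
Record hopf_algebra := HopfAlgebra {
  hA : algType k;
  hT : algType k;
  htens : hA -> hA -> hT;
  hT3 : lmodType k;
  htens3 : hA -> hA -> hA -> hT3;
  hDelta : hA -> hT;
  hS : hA -> hA;
  heps : hA -> k;
  htensP : is_tensor_alg htens;
  htens3P : is_tensor3 htens3;
  hDelta_hom : alg_hom hDelta;
  heps_lin : forall (c : k) x y, heps (c *: x + y) = c * heps x + heps y;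
  heps_mult : monoid_morphism heps;
  (* coassociativity (Delta (x) id) Delta = (id (x) Delta) Delta *)
  hcoassoc : forall (L R : hT -> hT3) (c d : hA -> hT -> hT3),
    lin L -> lin R -> (forall y, lin (c y)) -> (forall x, lin (d x)) ->
    (forall u v y, c y (htens u v) = htens3 u v y) ->
    (forall x u v, d x (htens u v) = htens3 x u v) ->
    (forall x y, L (htens x y) = c y (hDelta x)) ->
    (forall x y, R (htens x y) = d x (hDelta y)) ->
    forall a, L (hDelta a) = R (hDelta a);
  hcounitl : forall g : hT -> hA, lin g ->
    (forall x y, g (htens x y) = heps x *: y) -> forall a, g (hDelta a) = a;
  hcounitr : forall g : hT -> hA, lin g ->
    (forall x y, g (htens x y) = heps y *: x) -> forall a, g (hDelta a) = a;
  hS_lin : lin hS;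
  hantipodel : forall g : hT -> hA, lin g ->
    (forall x y, g (htens x y) = hS x * y) ->
    forall a, g (hDelta a) = heps a *: 1;
  hantipoder : forall g : hT -> hA, lin g ->
    (forall x y, g (htens x y) = x * hS y) ->
    forall a, g (hDelta a) = heps a *: 1
}.

(* alpha : A1 -> B (x) A2 is a quantum family of homomorphisms from H1 to H2,
   where (BA, tBA) models B (x) A2 and (BAA, tBAA) models B (x) A2 (x) A2:
   alpha(a_(1))_12 alpha(a_(2))_13 = (id (x) Delta_2)(alpha a). *)
Definition quantum_family (H1 H2 : hopf_algebra) (B BA BAA : algType k)
    (tBA : B -> hA H2 -> BA) (tBAA : B -> hA H2 -> hA H2 -> BAA)
    (alpha : hA H1 -> BA) : Prop :=
  alg_hom alpha /\
  forall (Lhs : hT H1 -> BAA) (i12 i13 D : BA -> BAA) (e : B -> hT H2 -> BAA),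
    lin i12 -> (forall b a, i12 (tBA b a) = tBAA b a 1) ->
    lin i13 -> (forall b a, i13 (tBA b a) = tBAA b 1 a) ->
    lin Lhs ->
    (forall x y, Lhs (htens x y) = i12 (alpha x) * i13 (alpha y)) ->
    (forall b, lin (e b)) ->
    (forall b u v, e b (htens u v) = tBAA b u v) ->
    lin D -> (forall b a, D (tBA b a) = e b (hDelta a)) ->
    forall a : hA H1, Lhs (hDelta a) = D (alpha a).

End Hopf.

(* Main.v *)
Require Import Defs.
From HB Require Import structures.
From mathcomp Require Import all_boot all_order all_algebra.
From Stdlib Require Import ClassicalEpsilon FunctionalExtensionality.
Set Implicit Arguments. Unset Strict Implicit. Unset Printing Implicit Defensive.
Import GRing.Theory.
Local Open Scope ring_scope.

Section Gen.
Variable k : fieldType.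

Lemma lin0 (U V : lmodType k) (f : U -> V) : lin f -> f 0 = 0.
Proof.
move=> Hf; have := Hf 1 0 0; rewrite !scale1r addr0.
by move=> /(congr1 (fun z => z - f 0)); rewrite subrr addrK => <-.
Qed.

Lemma linD (U V : lmodType k) (f : U -> V) : lin f -> forall x y, f (x + y) = f x + f y.
Proof. by move=> Hf x y; have := Hf 1 x y; rewrite !scale1r. Qed.

Lemma linZ (U V : lmodType k) (f : U -> V) : lin f -> forall c x, f (c *: x) = c *: f x.
Proof. by move=> Hf c x; have := Hf c x 0; rewrite addr0 (lin0 Hf) addr0. Qed.

Lemma lin_comp (U V W : lmodType k) (f : V -> W) (g : U -> V) :
  lin f -> lin g -> lin (fun x => f (g x)).
Proof. by move=> Hf Hg c x y; rewrite Hg Hf. Qed.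

Lemma lin_id (U : lmodType k) : lin (fun x : U => x).
Proof. by move=> c x y. Qed.

Lemma lin_comb (U V : lmodType k) (f g : U -> V) (r : k) :
  lin f -> lin g -> lin (fun x => r *: f x + g x).
Proof.
move=> Hf Hg c x y; rewrite Hf Hg !scalerDr !scalerA mulrC.
by rewrite addrACA.
Qed.

Lemma lin_mulr (U : lmodType k) (R : algType k) (f : U -> R) (c : R) :
  lin f -> lin (fun x => f x * c).
Proof. by move=> Hf a x y; rewrite Hf mulrDl -scalerAl. Qed.

Lemma lin_mull (U : lmodType k) (R : algType k) (f : U -> R) (c : R) :
  lin f -> lin (fun x => c * f x).
Proof. by move=> Hf a x y; rewrite Hf mulrDr scalerAr. Qed.

Lemma lin_scalv (U V : lmodType k) (e : U -> k) (v : V) :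
  (forall c x y, e (c *: x + y) = c * e x + e y) -> lin (fun x => e x *: v).
Proof. by move=> He c x y; rewrite He scalerDl scalerA. Qed.

Section Tens.
Variables (U V W : lmodType k) (t : U -> V -> W).
Hypothesis Ht : is_tensor t.

Lemma tensor_ext (X : lmodType k) (g1 g2 : W -> X) : lin g1 -> lin g2 ->
  (forall u v, g1 (t u v) = g2 (t u v)) -> forall w, g1 w = g2 w.
Proof.
move=> H1 H2 Heq w; case: Ht => [[Hl Hr] Hu].
have bf : bilin (fun u v => g1 (t u v)).
  by split=> [u|v]; [exact: (lin_comp H1 (Hl u)) | exact: (lin_comp H1 (Hr v))].
have [g [_ _ Hg]] := Hu X _ bf.
by rewrite (Hg g1 H1 (fun _ _ => erefl)) (Hg g2 H2 (fun u v => esym (Heq u v))).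
Qed.

Definition lift (X : lmodType k) (f : U -> V -> X) : W -> X :=
  epsilon (inhabits (fun _ => 0)) (fun g => lin g /\ forall u v, g (t u v) = f u v).

Lemma lift_spec (X : lmodType k) (f : U -> V -> X) : bilin f ->
  lin (lift f) /\ forall u v, lift f (t u v) = f u v.
Proof.
move=> bf.
apply: (epsilon_spec (inhabits (fun _ : W => 0 : X)) (fun g => lin g /\ forall u v, g (t u v) = f u v)).
by have [g [? ? _]] := Ht.2 X f bf; exists g.
Qed.

End Tens.

Section Conv.
Variable H : hopf_algebra k.
Variable R : algType k.

Lemma htensor : is_tensor (@htens k H).
Proof. by case: (htensP H). Qed.

Lemma Delta_lin : lin (@hDelta k H).
Proof. by case: (hDelta_hom H). Qed.

Definition conv (f h : hA H -> R) (a : hA H) : R :=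
  lift (@htens k H) (fun x y => f x * h y) (hDelta a).

Lemma bilin_mul (U V : lmodType k) (f : U -> R) (h : V -> R) :
  lin f -> lin h -> bilin (fun x y => f x * h y).
Proof. by move=> Hf Hh; split=> [x|y]; [exact: lin_mull | exact: lin_mulr]. Qed.

Lemma conv_spec (f h : hA H -> R) : lin f -> lin h ->
  lin (lift (@htens k H) (fun x y => f x * h y)) /\
  forall u v, lift (@htens k H) (fun x y => f x * h y) (htens u v) = f u * h v.
Proof. by move=> Hf Hh; apply: lift_spec; [exact: htensor | exact: bilin_mul]. Qed.

Lemma conv_lin (f h : hA H -> R) : lin f -> lin h -> lin (conv f h).
Proof. by move=> Hf Hh; apply: lin_comp; [exact: (conv_spec Hf Hh).1 | exact: Delta_lin]. Qed.

Lemma conv_eq (f h : hA H -> R) (mu : hT H -> R) : lin f -> lin h -> lin mu ->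
  (forall x y, mu (htens x y) = f x * h y) -> forall a, conv f h a = mu (hDelta a).
Proof.
move=> Hf Hh Hmu Heq a; have [Hl Ht] := conv_spec Hf Hh.
rewrite /conv; apply: (tensor_ext htensor) => // u v.
by rewrite Ht Heq.
Qed.

Lemma conv_ext (f f' h h' : hA H -> R) : (forall x, f x = f' x) -> (forall x, h x = h' x) ->
  forall a, conv f h a = conv f' h' a.
Proof.
move=> E1 E2 a.
by rewrite (functional_extensionality _ _ E1) (functional_extensionality _ _ E2).
Qed.

Definition eps1 (a : hA H) : R := heps a *: 1.

Lemma eps1_lin : lin eps1.
Proof. by apply: lin_scalv; exact: heps_lin. Qed.

Lemma conv_unitr (f : hA H -> R) : lin f -> forall a, conv f eps1 a = f a.
Proof.
move=> Hf a.
have bf : bilin (fun x y : hA H => heps y *: x).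
  split=> [x|y]; first by apply: lin_scalv; exact: heps_lin.
  by move=> c u v; rewrite scalerDr !scalerA mulrC.
have [Hg Hgt] := lift_spec htensor bf.
rewrite (conv_eq (mu := fun w => f (lift (@htens k H) (fun x y : hA H => heps y *: x) w))) //.
- by rewrite (hcounitr Hg Hgt).
- exact: eps1_lin.
- exact: lin_comp.
- by move=> x y; rewrite Hgt (linZ Hf) /eps1 -scalerAr mulr1.
Qed.

Lemma conv_unitl (f : hA H -> R) : lin f -> forall a, conv eps1 f a = f a.
Proof.
move=> Hf a.
have bf : bilin (fun x y : hA H => heps x *: y).
  split=> [x|y]; last by apply: lin_scalv; exact: heps_lin.
  by move=> c u v; rewrite scalerDr !scalerA mulrC.
have [Hg Hgt] := lift_spec htensor bf.
rewrite (conv_eq (mu := fun w => f (lift (@htens k H) (fun x y : hA H => heps x *: y) w))) //.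
- by rewrite (hcounitl Hg Hgt).
- exact: eps1_lin.
- exact: lin_comp.
- by move=> x y; rewrite Hgt (linZ Hf) /eps1 -scalerAl mul1r.
Qed.


Lemma conv_assoc (f h l : hA H -> R) : lin f -> lin h -> lin l ->
  forall a, conv (conv f h) l a = conv f (conv h l) a.
Proof.
move=> Hf Hh Hl a.
have [[T1 T2 T3] Ht3u] := htens3P H.
pose c y := lift (@htens k H) (fun u v => htens3 u v y).
have bc y : bilin (fun u v : hA H => htens3 u v y) := conj (fun u => T2 u y) (fun v => T3 v y).
have cS y : lin (c y) /\ forall u v, c y (htens u v) = htens3 u v y := lift_spec htensor (bc y).
pose d x := lift (@htens k H) (fun u v => htens3 x u v).
have bd x : bilin (fun u v : hA H => htens3 x u v) := conj (fun u => T1 x u) (fun v => T2 x v).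
have dS x : lin (d x) /\ forall u v, d x (htens u v) = htens3 x u v := lift_spec htensor (bd x).
have c_lin t : lin (fun y => c y t).
  move=> r y y'.
  apply: (tensor_ext htensor (cS _).1 (lin_comb r (cS y).1 (cS y').1)) => u v /=.
  by rewrite (cS (r *: y + y')).2 (cS y).2 (cS y').2 T1.
have d_lin t : lin (fun x => d x t).
  move=> r y y'.
  apply: (tensor_ext htensor (dS _).1 (lin_comb r (dS y).1 (dS y').1)) => u v /=.
  by rewrite (dS (r *: y + y')).2 (dS y).2 (dS y').2 T3.
pose L := lift (@htens k H) (fun x y => c y (hDelta x)).
have bL : bilin (fun x y => c y (hDelta x)).
  by split=> [x|y]; [exact: c_lin | move=> r x x' /=; rewrite Delta_lin; exact: (cS y).1].
have LS : lin L /\ forall x y, L (htens x y) = c y (hDelta x) := lift_spec htensor bL.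
pose Rr := lift (@htens k H) (fun x y => d x (hDelta y)).
have bR : bilin (fun x y => d x (hDelta y)).
  by split=> [x|y]; [move=> r y y' /=; rewrite Delta_lin; exact: (dS x).1 | exact: d_lin].
have RS : lin Rr /\ forall x y, Rr (htens x y) = d x (hDelta y) := lift_spec htensor bR.
have trif : trilin (fun x y z => f x * h y * l z).
  split=> [u v|u w|v w].
  - exact: lin_mull.
  - exact: (lin_mulr _ (lin_mull _ Hh)).
  - exact: (lin_mulr _ (lin_mulr _ Hf)).
have [M3 [M3l M3t _]] := Ht3u R _ trif.
have C1 y t : M3 (c y t) = lift (@htens k H) (fun x y => f x * h y) t * l y.
  apply: (tensor_ext htensor (lin_comp M3l (cS y).1)
            (lin_mulr _ (conv_spec Hf Hh).1)) => u v /=.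
  by rewrite (cS y).2 M3t (conv_spec Hf Hh).2.
have C2 w : M3 (L w) = lift (@htens k H) (fun x y => conv f h x * l y) w.
  apply: (tensor_ext htensor (lin_comp M3l LS.1)
            (conv_spec (conv_lin Hf Hh) Hl).1) => u v /=.
  by rewrite LS.2 C1 (conv_spec (conv_lin Hf Hh) Hl).2.
have C1' x t : M3 (d x t) = f x * lift (@htens k H) (fun x y => h x * l y) t.
  apply: (tensor_ext htensor (lin_comp M3l (dS x).1)
            (lin_mull _ (conv_spec Hh Hl).1)) => u v /=.
  by rewrite (dS x).2 M3t (conv_spec Hh Hl).2 mulrA.
have C2' w : M3 (Rr w) = lift (@htens k H) (fun x y => f x * conv h l y) w.
  apply: (tensor_ext htensor (lin_comp M3l RS.1)
            (conv_spec Hf (conv_lin Hh Hl)).1) => u v /=.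
  by rewrite RS.2 C1' (conv_spec Hf (conv_lin Hh Hl)).2.
change (lift (@htens k H) (fun x y => conv f h x * l y) (hDelta a) =
        lift (@htens k H) (fun x y => f x * conv h l y) (hDelta a)).
rewrite -C2 -C2'; congr (M3 _).
apply: (hcoassoc LS.1 RS.1 (fun y => (cS y).1) (fun x => (dS x).1)).
- by move=> u v y; rewrite (cS y).2.
- by move=> x u v; rewrite (dS x).2.
- exact: LS.2.
- exact: RS.2.
Qed.

End Conv.

Lemma lin_scal (U V : lmodType k) (f : U -> V) (r : k) : lin f -> lin (fun x => r *: f x).
Proof. by move=> Hf c x y; rewrite Hf scalerDr !scalerA mulrC. Qed.

Section Main.
Variables (H1 H2 : hopf_algebra k) (B BA BAA : algType k) (tBA : B -> hA H2 -> BA)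
  (tBAA : B -> hA H2 -> hA H2 -> BAA) (alpha : hA H1 -> BA).
Hypotheses (HBA : is_tensor_alg tBA) (HBAA : is_tensor3_alg tBAA)
  (Hqf : quantum_family tBA tBAA alpha).

Lemma tBA_t : is_tensor tBA. Proof. by case: HBA. Qed.
Lemma tBAm b x c y : tBA b x * tBA c y = tBA (b * c) (x * y). Proof. by case: HBA. Qed.
Lemma tBAl b : lin (tBA b). Proof. by case: tBA_t => [[]]. Qed.
Lemma tBAr x : lin (fun b => tBA b x). Proof. by case: tBA_t => [[]]. Qed.
Lemma tBAA_t : is_tensor3 tBAA. Proof. by case: HBAA. Qed.
Lemma tBAAm b x y c x' y' : tBAA b x y * tBAA c x' y' = tBAA (b * c) (x * x') (y * y').
Proof. by case: HBAA. Qed.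
Lemma alpha_lin : lin alpha. Proof. by case: Hqf => [[]]. Qed.
Lemma alpha_mm : monoid_morphism alpha. Proof. by case: Hqf => [[]]. Qed.
Lemma alpha1 : alpha 1 = 1. Proof. by case: alpha_mm. Qed.
Lemma alphaM x y : alpha (x * y) = alpha x * alpha y. Proof. by case: alpha_mm. Qed.

Lemma qf_apply (Phi : BAA -> BA) (G K : BA -> BA) :
  lin Phi -> lin G -> lin K ->
  (forall b c x y, Phi (tBAA (b * c) x y) = G (tBA b x) * tBA c y) ->
  (forall b (eb : hT H2 -> BAA), lin eb -> (forall u v, eb (htens u v) = tBAA b u v) ->
     forall x, Phi (eb (hDelta x)) = K (tBA b x)) ->
  forall a, conv (fun x => G (alpha x)) alpha a = K (alpha a).
Proof.
move=> HPhi HG HK Hpure HD a.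
case: tBAA_t => [[A1 A2 A3] _].
pose i12 := lift tBA (fun b a => tBAA b a 1).
have i12S : lin i12 /\ forall b a, i12 (tBA b a) = tBAA b a 1.
  by apply: (lift_spec tBA_t); split=> [b|x]; [exact: A2 | exact: A3].
pose i13 := lift tBA (fun b a => tBAA b 1 a).
have i13S : lin i13 /\ forall b a, i13 (tBA b a) = tBAA b 1 a.
  by apply: (lift_spec tBA_t); split=> [b|x]; [exact: A1 | exact: A3].
pose e b := lift (@htens k H2) (fun u v => tBAA b u v).
have eS b : lin (e b) /\ forall u v, e b (htens u v) = tBAA b u v.
  have bf : bilin (fun u v => tBAA b u v) by split=> [u|v]; [exact: A1 | exact: A2].
  have := lift_spec (@htensor H2) bf; rewrite /e; exact.
have e_lin t : lin (fun b => e b t).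
  move=> r y y'.
  apply: (tensor_ext (@htensor H2) (g1 := fun t => e (r *: y + y') t)
    (g2 := fun t => r *: e y t + e y' t) (eS _).1 (lin_comb r (eS y).1 (eS y').1)) => u v /=.
  by rewrite (eS (r *: y + y')).2 (eS y).2 (eS y').2 A3.
pose D := lift tBA (fun b a => e b (hDelta a)).
have DS : lin D /\ forall b a, D (tBA b a) = e b (hDelta a).
  apply: (lift_spec tBA_t); split=> [b|x]; last exact: e_lin.
  by move=> r x x' /=; rewrite Delta_lin; exact: (eS b).1.
have l12 : lin (fun x => i12 (alpha x)) := lin_comp i12S.1 alpha_lin.
have l13 : lin (fun x => i13 (alpha x)) := lin_comp i13S.1 alpha_lin.
have [LhsL LhsT] := conv_spec l12 l13.
have Hq := Hqf.2 _ _ _ _ _ i12S.1 i12S.2 i13S.1 i13S.2 LhsL LhsT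
   (fun b => (eS b).1) (fun b => (eS b).2) DS.1 DS.2 a.
have Hprod u v : Phi (i12 u * i13 v) = G u * v.
  have Hpv b x : forall v, Phi (i12 (tBA b x) * i13 v) = G (tBA b x) * v.
    apply: (tensor_ext tBA_t (lin_comp HPhi (lin_mull _ i13S.1))
              (lin_mull _ (@lin_id _))) => c y /=.
    by rewrite i12S.2 i13S.2 tBAAm mulr1 mul1r Hpure.
  apply: (tensor_ext tBA_t (g1 := fun u => Phi (i12 u * i13 v)) (g2 := fun u => G u * v)
            (lin_comp HPhi (lin_mulr _ i12S.1)) (lin_mulr _ HG)) => b x /=.
  exact: Hpv.
rewrite (conv_eq (mu := fun w => Phi (lift (@htens k H1)
              (fun x y => i12 (alpha x) * i13 (alpha y)) w))) //.
- rewrite Hq.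
  apply: (tensor_ext tBA_t (g1 := fun w => Phi (D w)) (lin_comp HPhi DS.1) HK) => b x /=.
  by rewrite DS.2; apply: HD; [exact: (eS b).1 | exact: (eS b).2].
- exact: lin_comp HG alpha_lin.
- exact: alpha_lin.
- exact: lin_comp HPhi LhsL.
- by move=> x y; rewrite LhsT Hprod.
Qed.

Definition Emap := lift tBA (fun b x => heps x *: tBA b 1).

Lemma ES : lin Emap /\ forall b x, Emap (tBA b x) = heps x *: tBA b 1.
Proof.
apply: (lift_spec tBA_t); split=> [b|x]; first by apply: lin_scalv; exact: heps_lin.
by move=> r b b'; rewrite (tBAr 1) scalerDr !scalerA mulrC.
Qed.

Lemma G1 (g : BA -> BA) : lin g -> (forall b a, g (tBA b a) = tBA b (hS a)) ->
  forall a, conv (fun x => g (alpha x)) alpha a = Emap (alpha a).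
Proof.
move=> Hg Hgt a.
have trif : trilin (fun b x y => tBA b (hS x * y)).
  split=> [b x|b y|x y].
  - exact: (lin_comp (tBAl b) (lin_mull _ (@lin_id _))).
  - by move=> r x x' /=; rewrite hS_lin mulrDl -scalerAl; exact: tBAl.
  - exact: tBAr.
have [Phi [PhiL PhiT _]] := tBAA_t.2 BA _ trif.
apply: (qf_apply PhiL Hg ES.1).
  by move=> b c x y; rewrite PhiT Hgt tBAm.
move=> b eb ebL ebT x.
have bS : bilin (fun u v : hA H2 => hS u * v).
  by split=> [u|v]; [exact: (lin_mull _ (@lin_id _)) | exact: (lin_mulr _ (@hS_lin _ H2))].
have [gSL gST] := lift_spec (@htensor H2) bS.
rewrite (tensor_ext (@htensor H2) (g1 := fun t => Phi (eb t))
   (g2 := fun t => tBA b (lift (@htens k H2) (fun u v : hA H2 => hS u * v) t))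
   (lin_comp PhiL ebL) (lin_comp (tBAl b) gSL)); last first.
  by move=> u v /=; rewrite ebT PhiT gST.
by rewrite (hantipodel gSL gST) ES.2 (linZ (tBAl b)).
Qed.

Lemma G2 : forall a, conv (fun x => Emap (alpha x)) alpha a = alpha a.
Proof.
move=> a.
have trif : trilin (fun (b : B) (x y : hA H2) => heps x *: tBA b y).
  split=> [b x|b y|x y].
  - exact: (lin_scal _ (tBAl b)).
  - by apply: lin_scalv; exact: heps_lin.
  - exact: (lin_scal _ (tBAr y)).
have [Phi [PhiL PhiT _]] := tBAA_t.2 BA _ trif.
apply: (qf_apply PhiL ES.1 (@lin_id _)).
  by move=> b c x y; rewrite PhiT ES.2 -scalerAl tBAm mul1r.
move=> b eb ebL ebT x.
have bS : bilin (fun u v : hA H2 => heps u *: v).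
  split=> [u|v]; last by apply: lin_scalv; exact: heps_lin.
  exact: (lin_scal _ (@lin_id _)).
have [gSL gST] := lift_spec (@htensor H2) bS.
rewrite (tensor_ext (@htensor H2) (g1 := fun t => Phi (eb t))
   (g2 := fun t => tBA b (lift (@htens k H2) (fun u v : hA H2 => heps u *: v) t))
   (lin_comp PhiL ebL) (lin_comp (tBAl b) gSL)); last first.
  by move=> u v /=; rewrite ebT PhiT gST (linZ (tBAl b)).
by rewrite (hcounitl gSL gST).
Qed.

Lemma P1 : forall a, conv alpha (fun x => alpha (hS x)) a = eps1 BA a.
Proof.
move=> a.
have bS : bilin (fun x y : hA H1 => x * hS y).
  by split=> [u|v]; [exact: (lin_mull _ (@hS_lin _ H1)) | exact: (lin_mulr _ (@lin_id _))].
have [g0L g0T] := lift_spec (@htensor H1) bS.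
rewrite (conv_eq (mu := fun w => alpha (lift (@htens k H1) (fun x y : hA H1 => x * hS y) w))).
- by rewrite (hantipoder g0L g0T) (linZ alpha_lin) alpha1.
- exact: alpha_lin.
- exact: (lin_comp alpha_lin (@hS_lin _ H1)).
- exact: (lin_comp alpha_lin g0L).
- by move=> x y; rewrite g0T alphaM.
Qed.

Lemma main (g : BA -> BA) : lin g -> (forall b a, g (tBA b a) = tBA b (hS a)) ->
  forall a, alpha (hS a) = g (alpha a).
Proof.
move=> Hg Hgt a.
have aL := alpha_lin.
have aSL : lin (fun x => alpha (hS x)) := lin_comp alpha_lin (@hS_lin _ H1).
have gAL : lin (fun x => g (alpha x)) := lin_comp Hg alpha_lin.
have FL : lin (fun x => Emap (alpha x)) := lin_comp ES.1 alpha_lin.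
pose F := fun x => Emap (alpha x).
pose aS := fun x => alpha (hS x).
pose gA := fun x => g (alpha x).
have Feps x : F x = eps1 BA x.
  transitivity (conv F (eps1 BA) x); first by rewrite conv_unitr.
  transitivity (conv F (conv alpha aS) x).
    by apply: conv_ext => // y; rewrite P1.
  rewrite -conv_assoc //.
  transitivity (conv alpha aS x); last exact: P1.
  by apply: conv_ext => // y; exact: G2.
transitivity (conv (eps1 BA) aS a); first by rewrite conv_unitl.
transitivity (conv (conv gA alpha) aS a).
  by apply: conv_ext => // y; rewrite (G1 Hg Hgt) -Feps.
rewrite conv_assoc //.
transitivity (conv gA (eps1 BA) a); last by rewrite conv_unitr.
by apply: conv_ext => // y; exact: P1.
Qed.

End Main.
End Gen.

Theorem theorem3p7 (k : fieldType) (H1 H2 : hopf_algebra k)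
  (B BA BAA : algType k) (tBA : B -> hA H2 -> BA)
  (tBAA : B -> hA H2 -> hA H2 -> BAA) (alpha : hA H1 -> BA) :
  is_tensor_alg tBA -> is_tensor3_alg tBAA ->
  quantum_family tBA tBAA alpha ->
  forall g : BA -> BA, lin g -> (forall b a, g (tBA b a) = tBA b (hS a)) ->
  forall a : hA H1, alpha (hS a) = g (alpha a).
Proof. exact: main. Qed.
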